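(* Let $\mathcal H$ be a complex Hilbert space and $T\in\mathcal B(\mathcal H)$ a non-invertible operator with $\|Tx\|\ge\|x\|$ for all $x$ and $\sigma_{ap}(T)\subseteq\partial\mathbb D$. Let $T'=T(T^*T)^{-1}$. Then (i) $\sigma(T)=\overline{\mathbb D}=\sigma(T')$, and (ii) $\sigma_{ap}(T)=\partial\mathbb D=\sigma_{ap}(T')$.
   Context: $\sigma_{ap}$ is the approximate point spectrum (set of $\lambda$ with $A-\lambda I$ not bounded below); $\mathbb D$ is the open unit disc. $T^*T\ge I$ is invertible so $T'$ is defined. *)

(* Defs.v *)
From HB Require Import structures.
From mathcomp Require Import all_boot all_order all_algebra.
From mathcomp Require Import complex.
From mathcomp Require Import reals.
Set Implicit Arguments. Unset Strict Implicit. Unset Printing Implicit Defensive.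
Import Order.TTheory GRing.Theory Num.Theory.
Local Open Scope ring_scope.
Local Open Scope complex_scope.

Section Hilbert.
Variable R : realType.
Variable V : lmodType R[i].
Variable ip : V -> V -> R[i].

Definition hnorm (x : V) : R := Num.sqrt (complex.Re (ip x x)).

(* inner product axioms (linear in the first argument) *)
Definition is_inner_product : Prop :=
  [/\ (forall (a : R[i]) (x y z : V), ip (a *: x + y) z = a * ip x z + ip y z),
      (forall x y : V, ip y x = (ip x y)^*),
      (forall x : V, 0 <= ip x x) &
      (forall x : V, ip x x = 0 -> x = 0)].

Definition hcomplete : Prop :=
  forall u : nat -> V,
    (forall e : R, 0 < e -> exists N : nat, forall m n : nat,
        (N <= m)%N -> (N <= n)%N -> hnorm (u m - u n) < e) ->
    exists l : V, forall e : R, 0 < e -> exists N : nat, forall n : nat,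
        (N <= n)%N -> hnorm (u n - l) < e.

Definition is_hilbert : Prop := is_inner_product /\ hcomplete.

Definition bounded_op (A : V -> V) : Prop :=
  (forall (a : R[i]) (x y : V), A (a *: x + y) = a *: A x + A y) /\
  exists M : R, forall x : V, hnorm (A x) <= M * hnorm x.

Definition is_adjoint (A S : V -> V) : Prop :=
  forall x y : V, ip (A x) y = ip x (S y).

Definition invertible_op (A : V -> V) : Prop :=
  exists B : V -> V, [/\ bounded_op B, cancel A B & cancel B A].

Definition shift_op (A : V -> V) (l : R[i]) : V -> V := fun x => A x - l *: x.

Definition spectrum (A : V -> V) : R[i] -> Prop :=
  fun l => ~ invertible_op (shift_op A l).

Definition bounded_below (A : V -> V) : Prop :=
  exists c : R, 0 < c /\ forall x : V, c * hnorm x <= hnorm (A x).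

Definition ap_spectrum (A : V -> V) : R[i] -> Prop :=
  fun l => ~ bounded_below (shift_op A l).

End Hilbert.

Definition closed_unit_disc (R : realType) : R[i] -> Prop := fun z => `|z| <= 1.
Definition unit_circle (R : realType) : R[i] -> Prop := fun z => `|z| = 1.

(* Main.v *)
Require Import Defs.
From HB Require Import structures.
From mathcomp Require Import all_boot all_order all_algebra.
From mathcomp Require Import complex reals classical_sets.
From mathcomp Require Import ring lra.
From Stdlib Require Import IndefiniteDescription Classical.
Import Order.TTheory GRing.Theory Num.Theory.
Local Open Scope ring_scope.
Local Open Scope complex_scope.
Import ComplexField.Normc.
Local Notation Rp := complex.Re.
Set Implicit Arguments. Unset Strict Implicit.

Section C.
Variable R : realType.
Implicit Types a b : R[i].
Lemma ReD a b : Rp (a + b) = Rp a + Rp b. Proof. by case: a => ? ?; case: b => ? ?. Qed.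
Lemma ReJ a : Rp ((conjc a)) = Rp a. Proof. by case: a. Qed.
Lemma ReC (r : R) : Rp (r%:C) = r. Proof. by []. Qed.
Lemma normc_ge0 a : 0 <= normc a. Proof. by case: a => ? ? /=; exact: sqrtr_ge0. Qed.
Lemma Re_le_normc a : Rp a <= normc a.
Proof.
case: a => r s /=. apply: le_trans (ler_norm r) _.
rewrite -sqrtr_sqr ler_sqrt ?addr_ge0 ?sqr_ge0 //. by rewrite lerDl sqr_ge0.
Qed.
Lemma mulcJ_normc a : a * (conjc a) = (normc a ^+ 2)%:C.
Proof.
case: a => r s /=. rewrite sqr_sqrtr ?addr_ge0 ?sqr_ge0 //.
rewrite /GRing.mul /=. congr (_ +i* _); ring.
Qed.
Lemma normC_def a : `|a| = (normc a)%:C. Proof. by case: a => r s; rewrite normc_def. Qed.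
Lemma normcR (r : R) : normc (r%:C) = `|r|.
Proof. by rewrite /= expr0n /= addr0 sqrtr_sqr. Qed.
End C.
Section C2.
Variable R : realType.
Implicit Types a b : R[i].
Lemma conjcD a b : (conjc (a + b)) = (conjc a) + (conjc b). Proof. exact: rmorphD. Qed.
Lemma conjcM a b : (conjc (a * b)) = (conjc a) * (conjc b). Proof. exact: rmorphM. Qed.
Lemma conjcN a : (conjc (- a)) = - (conjc a). Proof. exact: rmorphN. Qed.
Lemma conjcB a b : (conjc (a - b)) = (conjc a) - (conjc b). Proof. exact: rmorphB. Qed.
Lemma conjcR (r : R) : (conjc (r%:C)) = r%:C. Proof. exact: conjc_real. Qed.
Lemma conjcK' a : (conjc ((conjc a))) = a. Proof. exact: conjcK. Qed.
End C2.
Section H.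
Variable R : realType.
Variable V : lmodType R[i].
Variable ip : V -> V -> R[i].
Hypothesis Hip : is_inner_product ip.
Local Notation nrm := (hnorm ip).

Lemma ipDl x y z : ip (x + y) z = ip x z + ip y z.
Proof. case: Hip => L _ _ _. by have := L 1 x y z; rewrite scale1r mul1r. Qed.
Lemma ip0l z : ip 0 z = 0.
Proof. have h := ipDl 0 0 z; rewrite addr0 in h. by apply: (@addrI _ (ip 0 z)); rewrite addr0 -h. Qed.
Lemma ipZl a x z : ip (a *: x) z = a * ip x z.
Proof. case: Hip => L _ _ _. by have := L a x 0 z; rewrite addr0 ip0l addr0. Qed.
Lemma ipNl x z : ip (- x) z = - ip x z.
Proof. by rewrite -scaleN1r ipZl mulN1r. Qed.
Lemma ipBl x y z : ip (x - y) z = ip x z - ip y z.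
Proof. by rewrite ipDl ipNl. Qed.
Lemma ipC x y : ip y x = (conjc (ip x y)).
Proof. by case: Hip => _ L _ _; rewrite L. Qed.
Lemma ipDr x y z : ip z (x + y) = ip z x + ip z y.
Proof. by rewrite (ipC (x+y)) ipDl conjcD -!ipC. Qed.
Lemma ipZr a x z : ip z (a *: x) = (conjc a) * ip z x.
Proof. by rewrite (ipC (a *: x)) ipZl conjcM -ipC. Qed.
Lemma ip0r z : ip z 0 = 0.
Proof. by rewrite (ipC 0) ip0l conjc0. Qed.
Lemma ipNr x z : ip z (- x) = - ip z x.
Proof. by rewrite (ipC (- x)) ipNl conjcN -ipC. Qed.
Lemma ipBr x y z : ip z (x - y) = ip z x - ip z y.
Proof. by rewrite ipDr ipNr. Qed.

Lemma ipxx_ge0 x : 0 <= Rp (ip x x).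
Proof. case: Hip => _ _ L _. by have := L x; rewrite lecE => /andP[_]. Qed.
Lemma hn_ge0 x : 0 <= nrm x. Proof. exact: sqrtr_ge0. Qed.
Lemma hn2 x : nrm x ^+ 2 = Rp (ip x x). Proof. by rewrite sqr_sqrtr // ipxx_ge0. Qed.
Lemma ipxx x : ip x x = (nrm x ^+ 2)%:C.
Proof.
case: Hip => _ _ L _. have := L x; rewrite lecE => /andP[/eqP h _].
rewrite hn2. move: h; case: (ip x x) => a b /= ->. done.
Qed.
Lemma hn_eq0 x : nrm x = 0 -> x = 0.
Proof. case: Hip => _ _ _ L h. apply: L. by rewrite ipxx h expr0n. Qed.
Lemma hn0 : nrm 0 = 0.
Proof. by rewrite /hnorm ip0l /= sqrtr0. Qed.

Lemma sq_le (u v : R) : 0 <= u -> 0 <= v -> u ^+ 2 <= v ^+ 2 -> u <= v.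
Proof. move=> hu hv h. nra. Qed.
Lemma sq_eq (u v : R) : 0 <= u -> 0 <= v -> u ^+ 2 = v ^+ 2 -> u = v.
Proof. move=> hu hv h. apply/eqP; rewrite -(eqrXn2 (n:=2)) //. by rewrite h. Qed.

Lemma hnZ a x : nrm (a *: x) = normc a * nrm x.
Proof.
apply: sq_eq; rewrite ?mulr_ge0 ?normc_ge0 ?hn_ge0 //.
rewrite hn2 ipZl ipZr mulrA mulcJ_normc ipxx -rmorphM /=. by rewrite exprMn.
Qed.
Lemma hnN x : nrm (- x) = nrm x.
Proof. by rewrite -scaleN1r hnZ normcN normc1 mul1r. Qed.
Lemma hnB x y : nrm (x - y) = nrm (y - x).
Proof. by rewrite -hnN opprB. Qed.

Lemma CS x y : normc (ip x y) <= nrm x * nrm y.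
Proof.
set p := ip x y. set X := nrm x ^+ 2. set Y := nrm y ^+ 2. set P := normc p ^+ 2.
have e : p * (conjc p) = P%:C by rewrite mulcJ_normc.
have key : forall t : R, 0 <= X - t * P - t * P + t * t * P * Y.
  move=> t. have := ipxx_ge0 (x - (t%:C * p) *: y).
  rewrite ipBl !ipBr !ipZl !ipZr !ipxx -/p (ipC x y) -/p conjcM conjcR.
  have -> : (nrm x ^+ 2)%:C - (t%:C * (conjc p)) * p - ((t%:C * p) * (conjc p) - (t%:C * p) * ((t%:C * (conjc p)) * (nrm y ^+ 2)%:C))
     = X%:C - t%:C * (p * (conjc p)) - t%:C * (p * (conjc p)) + t%:C * t%:C * (p * (conjc p)) * Y%:C by rewrite /X /Y; ring.
  by rewrite e -!rmorphM -!rmorphB -rmorphD.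
have hX : 0 <= X by rewrite /X sqr_ge0.
have hY : 0 <= Y by rewrite /Y sqr_ge0.
have hP : 0 <= P by rewrite /P sqr_ge0.
have PXY : P <= X * Y.
  have [Y0|Ypos] := eqVneq Y 0.
    have [P0|Ppos] := eqVneq P 0; first by rewrite P0 Y0 mulr0.
    have Pp : 0 < P by rewrite lt_def Ppos hP.
    have := key ((X + 1) / (2 * P)). rewrite Y0 mulr0 addr0.
    have -> : (X + 1) / (2 * P) * P = (X + 1) / 2 by field; rewrite Ppos.
    lra.
  have Yp : 0 < Y by rewrite lt_def Ypos hY.
  set t := 1 / Y. have tY : t * Y = 1 by rewrite /t mulrC mulrA mulr1 mulfV // gt_eqF.
  have h := key t. have := mulr_ge0 h (ltW Yp).
  have -> : (X - t * P - t * P + t * t * P * Y) * Y = X * Y - P * (t * Y) - P * (t * Y) + P * (t * Y) * (t * Y) by ring.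
  rewrite tY. lra.
apply: sq_le; rewrite ?mulr_ge0 ?normc_ge0 ?hn_ge0 //. by rewrite exprMn.
Qed.

Lemma hnD x y : nrm (x + y) <= nrm x + nrm y.
Proof.
apply: sq_le; rewrite ?addr_ge0 ?hn_ge0 //.
rewrite hn2 ipDl !ipDr !ReD (ipC x y) ReJ -!hn2.
have := Re_le_normc (ip x y). have := CS x y. nra.
Qed.

Hypothesis Hcomp : hcomplete ip.

Definition lin (A : V -> V) := forall a x y, A (a *: x + y) = a *: A x + A y.
Definition bnd (A : V -> V) (M : R) := forall x, nrm (A x) <= M * nrm x.
Definition bb (A : V -> V) (c : R) := 0 < c /\ forall x, c * nrm x <= nrm (A x).
Definition surj (A : V -> V) := forall y, exists x, A x = y.

Section Lin.
Variable A : V -> V.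
Hypothesis LA : lin A.
Lemma linD x y : A (x + y) = A x + A y.
Proof. by have := LA 1 x y; rewrite !scale1r. Qed.
Lemma lin0 : A 0 = 0.
Proof. have h := linD 0 0; rewrite addr0 in h. by apply: (@addrI _ (A 0)); rewrite addr0 -h. Qed.
Lemma linZ a x : A (a *: x) = a *: A x.
Proof. by have := LA a x 0; rewrite !addr0 lin0 addr0. Qed.
Lemma linN x : A (- x) = - A x.
Proof. by rewrite -scaleN1r linZ scaleN1r. Qed.
Lemma linB x y : A (x - y) = A x - A y.
Proof. by rewrite linD linN. Qed.
End Lin.

Lemma shift_lin A l : lin A -> lin (shift_op A l).
Proof.
move=> LA a x y; rewrite /shift_op LA scalerDr scalerBr !scalerA [l * a]mulrC.
by rewrite opprD addrACA.
Qed.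

Lemma bb_lip A mu nu c : bb (shift_op A mu) c -> normc (nu - mu) < c ->
  bb (shift_op A nu) (c - normc (nu - mu)).
Proof.
move=> [c0 H] hn; split; first by rewrite subr_gt0.
move=> x. have e : shift_op A mu x = shift_op A nu x + (nu - mu) *: x.
  by rewrite /shift_op scalerBl addrA subrK.
have := H x; rewrite e => h1. have := hnD (shift_op A nu x) ((nu - mu) *: x).
rewrite hnZ => h2. rewrite mulrBl. lra.
Qed.

Lemma hn0_eq0 x (c : R) : 0 < c -> c * nrm x <= 0 -> x = 0.
Proof. move=> c0 h; apply: hn_eq0. have := hn_ge0 x. nra. Qed.

Lemma inv_of A c : lin A -> bb A c -> surj A -> invertible_op ip A.
Proof.
move=> LA [c0 HA] SA.
have HS : forall y, {x | A x = y} by move=> y; apply: constructive_indefinite_description.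
pose S := fun y => proj1_sig (HS y).
have AS : forall y, A (S y) = y := fun y => proj2_sig (HS y).
have inj : forall x y, A x = A y -> x = y.
  move=> x y e; apply/eqP; rewrite -subr_eq0; apply/eqP.
  apply: (hn0_eq0 c0). by rewrite -hn0 -(subrr (A x)) {2}e -linB.
exists S; split.
- split.
    by move=> a x y; apply: inj; rewrite LA !AS.
  exists c^-1 => y. rewrite ler_pdivlMl //. by rewrite -{2}(AS y).
- by move=> x; apply: inj; rewrite AS.
- exact: AS.
Qed.

Lemma inv_to A : invertible_op ip A -> (exists c, bb A c) /\ surj A.
Proof.
move=> [B [[LB [M HM]] AB BA]]; split; last by move=> y; exists (B y).
exists (`|M| + 1)^-1; split; first by rewrite invr_gt0; have := normr_ge0 M; lra.
move=> x. rewrite -ler_pdivlMl ?invr_gt0 ?invrK; last by have := normr_ge0 M; lra.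
have := HM (A x); rewrite AB => h. have := hn_ge0 (A x). have := ler_norm M. nra.
Qed.

Lemma zid1 (G : zmodType) (y a b : G) : y - a - (y - b) = b - a.
Proof. by rewrite opprB addrC addrA subrK. Qed.

Lemma hn_tri a b c : nrm (a - c) <= nrm (a - b) + nrm (b - c).
Proof. by have := hnD (a - b) (b - c); rewrite addrA subrK. Qed.

Lemma two_pow_ge (n : nat) : n%:R <= (2 : R) ^+ n.
Proof. by rewrite -natrX ler_nat ltnW // ltn_expl. Qed.

Lemma transfer A B M c d : lin A -> lin B -> bnd A M -> bb A c -> surj A -> 0 <= d -> d * 2 <= c ->
  (forall x, nrm (B x - A x) <= d * nrm x) -> surj B.
Proof.
move=> LA LB HM [c0 HA] SA d0 dc HD y.
have HS : forall y, {x | A x = y} by move=> z; apply: constructive_indefinite_description.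
pose S := fun y => proj1_sig (HS y).
have AS : forall y, A (S y) = y := fun y => proj2_sig (HS y).
pose D := fun x => B x - A x.
have LD : lin D by move=> a x z; rewrite /D LA LB scalerBr opprD addrACA.
pose u := fix u n := if n is n'.+1 then S (y - D (u n')) else 0.
have uS : forall n, A (u n.+1) = y - D (u n) := fun n => AS _.
pose K := nrm (u 1%N - u 0%N).
have K0 : 0 <= K by exact: hn_ge0.
have step : forall n, nrm (u n.+2 - u n.+1) * 2 <= nrm (u n.+1 - u n).
  move=> n. have h := HA (u n.+2 - u n.+1). rewrite linB // !uS in h.
  have e : y - D (u n.+1) - (y - D (u n)) = D (u n - u n.+1).
    by rewrite (linB LD) zid1.
  rewrite e in h. have h2 := HD (u n - u n.+1). change (is_true (nrm (D (u n - u n.+1)) <= d * nrm (u n - u n.+1))) in h2. rewrite (hnB (u n)) in h2.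
  have := hn_ge0 (u n.+2 - u n.+1). have := hn_ge0 (u n.+1 - u n). nra.
have geo : forall n, nrm (u n.+1 - u n) * 2 ^+ n <= K.
  elim => [|n IH]; first by rewrite expr0 mulr1.
  rewrite exprS. have := step n. have : 0 <= (2:R) ^+ n by rewrite exprn_ge0.
  have := hn_ge0 (u n.+2 - u n.+1). nra.
have cau : forall n k, nrm (u (n + k)%N - u n) * 2 ^+ (n + k) <= 2 * K * (2 ^+ k - 1).
  move=> n; elim => [|k IH]; first by rewrite addn0 subrr hn0 mul0r expr0 subrr mulr0.
  rewrite addnS !exprS. have := hn_tri (u (n + k).+1) (u (n + k)%N) (u n).
  have := geo (n + k)%N. have : 0 <= (2:R) ^+ (n + k) by rewrite exprn_ge0.
  have := hn_ge0 (u (n + k).+1 - u n). nra.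
have cau2 : forall n m, (n <= m)%N -> nrm (u m - u n) * 2 ^+ n <= 2 * K.
  move=> n m /subnKC <-. have := cau n (m - n)%N. rewrite exprD.
  have : 1 <= (2:R) ^+ (m - n) by apply: exprn_ege1; lra.
  have : 0 <= (2:R) ^+ n by rewrite exprn_ge0.
  have := hn_ge0 (u (n + (m - n))%N - u n). nra.
have cauchy : forall e : R, 0 < e -> exists N : nat, forall m n : nat,
        (N <= m)%N -> (N <= n)%N -> nrm (u m - u n) < e.
  move=> e e0.
  have [N HN] : exists N : nat, 2 * K / e < N%:R.
    by exists (Num.bound (2 * K / e)); apply: archi_boundP; rewrite divr_ge0 // ?mulr_ge0 // ltW.
  have key : forall n m, (N <= n)%N -> (n <= m)%N -> nrm (u m - u n) < e.
    move=> n m Nn nm. have := cau2 n m nm. have := two_pow_ge n.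
    have : (N%:R : R) <= n%:R by rewrite ler_nat.
    move: HN; rewrite ltr_pdivrMr // => HN.
    move=> h1 h2 h3. have h4 : N%:R * e <= 2 ^+ n * e.
      by rewrite ler_pM2r //; apply: le_trans h1 h2.
    have h5 : 0 < (2:R) ^+ n by rewrite exprn_gt0.
    have := hn_ge0 (u m - u n). nra.
  exists N => m n Nm Nn. case: (leqP n m) => h; first exact: key.
  by rewrite hnB; apply: key => //; apply: ltnW.
have [l Hl] := Hcomp cauchy.
have Bb : forall z, nrm (B z) <= (d + `|M|) * nrm z.
  move=> z. have -> : B z = D z + A z by rewrite /D subrK.
  have := hnD (D z) (A z). have := HD z. have := HM z. have := ler_norm M.
  have := hn_ge0 z. nra.
have small : forall e, 0 < e -> nrm (B l - y) < e.
  move=> e e0. set G := 2 * d + `|M| + 1.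
  have G0 : 0 < G by rewrite /G; have := normr_ge0 M; lra.
  have e'0 : 0 < e / G by rewrite divr_gt0.
  have [N1 H1] := Hl _ e'0. have [N2 H2] := cauchy _ e'0.
  set n := maxn N1 N2.
  have h1 := H1 n.+1 (leq_trans (leq_maxl _ _) (leqnSn _)).
  have h2 := H2 n.+1 n (leq_trans (leq_maxr _ _) (leqnSn _)) (leq_maxr _ _).
  have ht := hn_tri (B l) (B (u n.+1)) y.
  have e1 : B (u n.+1) - y = D (u n.+1 - u n).
    rewrite (linB LD). have -> : B (u n.+1) = D (u n.+1) + (y - D (u n)) by rewrite -uS /D subrK.
    by rewrite addrCA [y + _]addrC addrK.
  rewrite e1 -(linB LB) in ht. have b1 := Bb (l - u n.+1). rewrite hnB in b1.
  have b2 := HD (u n.+1 - u n). change (is_true (nrm (D (u n.+1 - u n)) <= d * nrm (u n.+1 - u n))) in b2.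
  have eG : e / G * G = e by rewrite mulfVK // gt_eqF.
  have := normr_ge0 M. have := hn_ge0 (u n.+1 - l). have := hn_ge0 (u n.+1 - u n).
  rewrite /G in eG G0. nra.
exists l. apply/eqP; rewrite -subr_eq0; apply/eqP; apply: hn_eq0.
apply/eqP; rewrite eq_le hn_ge0 andbT; apply/negP => /negP; rewrite -ltNge => h.
by have := small _ h; rewrite ltxx.
Qed.

Lemma shift_transfer A M mu nu c : lin A -> bnd A M -> bb (shift_op A mu) c ->
  surj (shift_op A mu) -> normc (nu - mu) * 2 <= c -> surj (shift_op A nu).
Proof.
move=> LA HM Hb Hs hd.
apply: (@transfer (shift_op A mu) (shift_op A nu) (`|M| + normc mu) c (normc (nu - mu))) => //.
- exact: shift_lin.
- exact: shift_lin.
- move=> x; rewrite /shift_op. have := hnD (A x) (- (mu *: x)). rewrite hnN hnZ.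
  have := HM x. have := ler_norm M. have := hn_ge0 x. nra.
- exact: normc_ge0.
- move=> x; rewrite /shift_op.
  have -> : A x - nu *: x - (A x - mu *: x) = (mu - nu) *: x.
    by rewrite scalerBl opprB addrC addrA subrK.
  by rewrite hnZ -normcN opprB.
Qed.

Lemma normc_sub_path (mu0 mu1 : R[i]) (s t : R) :
  normc ((mu0 + s%:C * (mu1 - mu0)) - (mu0 + t%:C * (mu1 - mu0))) = `|s - t| * normc (mu1 - mu0).
Proof.
have -> : (mu0 + s%:C * (mu1 - mu0)) - (mu0 + t%:C * (mu1 - mu0)) = (s%:C - t%:C) * (mu1 - mu0) by ring.
by rewrite -rmorphB normcM normcR.
Qed.

Lemma path_surj A M mu0 mu1 : lin A -> bnd A M ->
  (forall t : R, 0 <= t <= 1 -> exists c, bb (shift_op A (mu0 + t%:C * (mu1 - mu0))) c) ->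
  surj (shift_op A mu1) -> surj (shift_op A mu0).
Proof.
move=> LA HM Hbb S1.
pose g := fun t : R => mu0 + t%:C * (mu1 - mu0).
have g0 : g 0 = mu0 by rewrite /g mul0r addr0.
have g1 : g 1 = mu1 by rewrite /g mul1r addrC subrK.
pose Dl := normc (mu1 - mu0).
have Dl0 : 0 <= Dl by exact: normc_ge0.
have loc : forall t u c, bb (shift_op A (g t)) c -> `|u - t| * Dl * 4 <= c ->
    (surj (shift_op A (g u)) <-> surj (shift_op A (g t))).
  move=> t u c hb hd. have c0 : 0 < c by case: hb.
  have nd : normc (g u - g t) = `|u - t| * Dl by rewrite normc_sub_path.
  have nd' : normc (g t - g u) = `|u - t| * Dl by rewrite normc_sub_path distrC.
  have dpos : 0 <= `|u - t| * Dl by rewrite mulr_ge0.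
  have lt : normc (g u - g t) < c by rewrite nd; lra.
  have hb2 := bb_lip hb lt.
  split => hs.
  - apply: (shift_transfer LA HM hb2 hs). rewrite nd' nd. lra.
  - apply: (shift_transfer LA HM hb hs). rewrite nd. lra.
apply: NNPP => N0.
pose E := fun t : R => 0 <= t <= 1 /\ ~ surj (shift_op A (g t)).
have hs : has_sup E.
  split; first by exists 0; split; [rewrite lexx ler01 | rewrite g0].
  by exists 1 => x [/andP[_ ?] _].
set s := sup E.
have s_ub : forall x, E x -> x <= s by move=> x; apply: sup_upper_bound.
have s0 : 0 <= s by apply: s_ub; split; [rewrite lexx ler01 | rewrite g0].
have s1 : s <= 1 by apply: ge_sup; [case: hs | move=> x [/andP[_ ?] _]].
have [c hc] := Hbb s (introT andP (conj s0 s1)).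
have c0 : 0 < c by case: hc.
pose dl := c / (4 * (Dl + 1)).
have dl0 : 0 < dl by rewrite /dl divr_gt0 //; lra.
have dlD : dl * (4 * (Dl + 1)) = c by rewrite /dl mulfVK // gt_eqF //; lra.
have near : forall u, `|u - s| <= dl -> `|u - s| * Dl * 4 <= c.
  move=> u hu. have := normr_ge0 (u - s). nra.
have nSs : ~ surj (shift_op A (g s)).
  have [e Ee he] := sup_adherent dl0 hs.
  have es : e <= s := s_ub e Ee.
  have he2 : s - dl < e := he.
  move=> H; apply: Ee.2. apply: (proj2 (loc s e c hc (near e _)) H).
  rewrite ler0_norm ?subr_le0 //; lra.
case: (lerP (1 - s) dl) => h1.
  apply: nSs; apply: (proj1 (loc s 1 c hc (near 1 _))); first by rewrite ger0_norm ?subr_ge0.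
  by rewrite g1.
have Eu : E (s + dl).
  split; first by apply/andP; split; lra.
  move=> H; apply: nSs; apply: (proj1 (loc s (s + dl) c hc (near _ _)) H).
  have -> : s + dl - s = dl by ring.
  by rewrite gtr0_norm.
have := s_ub _ Eu. lra.
Qed.

Lemma normc_scal (a : R) (l : R[i]) : normc (a%:C * l) = `|a| * normc l.
Proof. by rewrite normcM normcR. Qed.

Lemma path_scal (b t : R) (l : R[i]) : l + t%:C * (b%:C * l - l) = (1 + t * (b - 1))%:C * l.
Proof. rewrite rmorphD rmorphM rmorphB /=. ring. Qed.

Lemma big_surj A M mu : lin A -> bnd A M -> 2 * `|M| < normc mu -> surj (shift_op A mu).
Proof.
move=> LA HM hmu.
have M0 := normr_ge0 M.
have n0 : 0 < normc mu by lra.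
have mu0 : - mu != 0.
  rewrite oppr_eq0; apply/eqP => e; move: n0; rewrite e normc0 ltxx //.
apply: (@transfer (fun x => (- mu) *: x) (shift_op A mu) (normc mu) (normc mu) `|M|) => //.
- by move=> a x y; rewrite scalerDr !scalerA mulrC.
- exact: shift_lin.
- by move=> x /=; rewrite hnZ normcN.
- by split => // x /=; rewrite hnZ normcN.
- by move=> y; exists ((- mu)^-1 *: y) => /=; rewrite scalerA mulfV // scale1r.
- lra.
- move=> x; rewrite /shift_op scaleNr opprK subrK.
  have := HM x. have := ler_norm M. have := hn_ge0 x. nra.
Qed.

Lemma out_surj A M l : lin A -> bnd A M -> 1 < normc l ->
  (forall mu, 1 < normc mu -> exists c, bb (shift_op A mu) c) -> surj (shift_op A l).
Proof.
move=> LA HM hl Hout.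
have M0 := normr_ge0 M.
set R0 := 2 * `|M| + 2.
apply: (@path_surj A M l (R0%:C * l)) => //.
  move=> t /andP[t0 t1]; apply: Hout.
  rewrite path_scal.
  have ha : 1 <= 1 + t * (R0 - 1) by rewrite /R0; nra.
  move: ha; set a := 1 + t * (R0 - 1) => ha.
  have ha0 : `|a| = a by apply: ger0_norm; lra.
  rewrite normc_scal ha0; nra.
have hR0 : `|R0| = R0 by apply: ger0_norm; rewrite /R0; lra.
apply: big_surj LA HM _. rewrite normc_scal hR0 /R0; nra.
Qed.

Lemma in_nsurj A M l : lin A -> bnd A M -> ~ surj (shift_op A 0) ->
  (forall mu, normc mu < 1 -> exists c, bb (shift_op A mu) c) -> normc l < 1 ->
  ~ surj (shift_op A l).
Proof.
move=> LA HM N0 Hin hl hs; apply: N0.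
apply: (@path_surj A M 0 l) => //.
move=> t /andP[t0 t1]; apply: Hin.
rewrite add0r subr0 normc_scal ger0_norm //.
have := normc_ge0 l. nra.
Qed.

Lemma circ_ninv A M l : lin A -> bnd A M ->
  (forall mu, normc mu < 1 -> ~ surj (shift_op A mu)) -> normc l = 1 ->
  ~ invertible_op ip (shift_op A l).
Proof.
move=> LA HM Hin hl /inv_to [[c hc] hs].
have c0 : 0 < c by case: hc.
set ep := c / (4 * (c + 1)).
have ep0 : 0 < ep by rewrite /ep divr_gt0 //; lra.
have epc : ep * (4 * (c + 1)) = c by rewrite /ep mulfVK // gt_eqF //; lra.
apply: (Hin ((1 - ep)%:C * l)).
  rewrite normc_scal hl mulr1 ger0_norm; nra.
apply: (shift_transfer LA HM hc hs).
have -> : (1 - ep)%:C * l - l = (- ep)%:C * l by rewrite rmorphB rmorphN /=; ring.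
rewrite normc_scal hl mulr1 normrN gtr0_norm //. nra.
Qed.

Lemma circ_ap A M l : lin A -> bnd A M ->
  (forall mu, 1 < normc mu -> exists c, bb (shift_op A mu) c) ->
  ~ invertible_op ip (shift_op A l) -> normc l = 1 ->
  ~ bounded_below ip (shift_op A l).
Proof.
move=> LA HM Hout Hni hl [c hc]. apply: Hni.
apply: (inv_of (shift_lin l LA) hc).
apply: (@path_surj A M l (2%:C * l)) => //.
  move=> t /andP[t0 t1].
  rewrite path_scal (_ : 1 + t * (2 - 1) = 1 + t); last by ring.
  have [->|tp] := eqVneq t 0.
    by exists c; rewrite addr0 mul1r.
  apply: Hout. rewrite normc_scal hl mulr1 ger0_norm; last by lra.
  have : 0 < t by rewrite lt_def tp t0. lra.
apply: out_surj LA HM _ Hout. rewrite normc_scal hl mulr1 ger0_norm //; lra.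
Qed.

Lemma picture A M : lin A -> bnd A M ->
  (forall mu, normc mu != 1 -> exists c, bb (shift_op A mu) c) ->
  ~ surj (shift_op A 0) ->
  (forall l, ~ invertible_op ip (shift_op A l) <-> normc l <= 1) /\
  (forall l, ~ bounded_below ip (shift_op A l) <-> normc l = 1).
Proof.
move=> LA HM Hbb N0.
have Hout : forall mu, 1 < normc mu -> exists c, bb (shift_op A mu) c.
  by move=> mu h; apply: Hbb; rewrite gt_eqF.
have Hin : forall mu, normc mu < 1 -> exists c, bb (shift_op A mu) c.
  by move=> mu h; apply: Hbb; rewrite lt_eqF.
have Hns : forall mu, normc mu < 1 -> ~ surj (shift_op A mu).
  by move=> mu h; apply: (in_nsurj LA HM N0 Hin h).
have Hinv_out : forall l, 1 < normc l -> invertible_op ip (shift_op A l).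
  move=> l h; have [c hc] := Hout l h.
  exact: (inv_of (shift_lin l LA) hc (out_surj LA HM h Hout)).
have Hcirc : forall l, normc l = 1 -> ~ invertible_op ip (shift_op A l).
  by move=> l; apply: (circ_ninv LA HM Hns).
split => l; split.
- move=> hn. rewrite leNgt; apply/negP => h; exact: hn (Hinv_out l h).
- move=> hl hi. have [h|h|h] := ltrgtP (normc l) 1.
  + exact: (Hns l h (proj2 (inv_to hi))).
  + lra.
  + exact: Hcirc l h hi.
- move=> hn. apply: NNPP => hne; apply: hn; apply: Hbb; apply/eqP; exact: hne.
- move=> hl. exact: (circ_ap LA HM Hout (Hcirc l hl) hl).
Qed.

Lemma inv_ext A A' : invertible_op ip A -> (forall x, A x = A' x) -> invertible_op ip A'.
Proof.
move=> [B [HB c1 c2]] e; exists B; split => //.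
- by move=> x; rewrite -e c1.
- by move=> x; rewrite -e c2.
Qed.

Lemma le_from_sq (h k : R) : 0 <= h -> 0 <= k -> h ^+ 2 <= k * h -> h <= k.
Proof. move=> h0 k0 hk; nra. Qed.

Lemma bb_of A (K : R) : 0 < K -> (forall x, nrm x <= K * nrm (A x)) -> exists c, bb A c.
Proof.
move=> K0 H; exists K^-1; split; first by rewrite invr_gt0.
by move=> x; rewrite ler_pdivrMl.
Qed.

Lemma normc_conj (z : R[i]) : normc (conjc z) = normc z.
Proof. by case: z => a b /=; rewrite sqrrN. Qed.

Lemma uc_iff (l : R[i]) : unit_circle l <-> normc l = 1.
Proof. rewrite /unit_circle normC_def; split => [[] //|-> //]. Qed.

Lemma cd_iff (l : R[i]) : closed_unit_disc l <-> normc l <= 1.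
Proof. by rewrite /closed_unit_disc normC_def (_ : 1 = 1%:C) // lecR. Qed.

Lemma mainT (T : V -> V) (HT : bounded_op ip T)
  (Tstar : V -> V) (HTstar : bounded_op ip Tstar) (Hadj : is_adjoint ip T Tstar)
  (Q : V -> V) (HQ : bounded_op ip Q)
  (HQl : cancel (fun x => Tstar (T x)) Q) (HQr : cancel Q (fun x => Tstar (T x)))
  (Hninv : ~ invertible_op ip T)
  (Hexp : forall x : V, hnorm ip x <= hnorm ip (T x))
  (Hap : forall l : R[i], ap_spectrum ip T l -> unit_circle l) :
  let T' := fun x => T (Q x) in
  ((forall l : R[i], spectrum ip T l <-> closed_unit_disc l) /\
   (forall l : R[i], spectrum ip T' l <-> closed_unit_disc l)) /\
  ((forall l : R[i], ap_spectrum ip T l <-> unit_circle l) /\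
   (forall l : R[i], ap_spectrum ip T' l <-> unit_circle l)).
Proof.
move=> T'.
case: HT => LT [MT HMT]. case: HTstar => LTs [MTs HMTs]. case: HQ => LQ _.
have HbbT : forall mu, normc mu != 1 -> exists c, bb (shift_op T mu) c.
  move=> mu h; apply: NNPP => hn. move/negP: h; apply. apply/eqP/uc_iff; exact: Hap.
have N0T : ~ surj (shift_op T 0).
  move=> hs; apply: Hninv.
  have hb : bb (shift_op T 0) 1.
    by split; [exact: ltr01 | move=> x; rewrite /shift_op scale0r subr0 mul1r; exact: Hexp].
  apply: (inv_ext (inv_of (shift_lin 0 LT) hb hs)).
  by move=> x; rewrite /shift_op scale0r subr0.
have [PT1 PT2] := picture LT HMT HbbT N0T.
have LT' : lin T' by move=> a x y; rewrite /T' LQ LT.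
have HMT' : bnd T' 1.
  move=> x; rewrite mul1r /T'. apply: le_from_sq; rewrite ?hn_ge0 //.
  rewrite hn2 Hadj HQr. apply: le_trans (Re_le_normc _) _.
  apply: le_trans (CS _ _) _. rewrite mulrC. apply: ler_wpM2l; first exact: hn_ge0.
  exact: Hexp.
have MS0 : 0 < `|MTs| + 1 by have := normr_ge0 MTs; lra.
have HMS : forall z, nrm (Tstar z) <= (`|MTs| + 1) * nrm z.
  move=> z. have := HMTs z. have := ler_norm MTs. have := hn_ge0 z. nra.
have key1 : forall mu x, nrm (x - mu *: Tstar x) <= (`|MTs| + 1) * nrm (shift_op T' mu x).
  move=> mu x. have := HMS (shift_op T' mu x).
  by rewrite /shift_op (linB LTs) (linZ LTs) /T' HQr.
have HbbT' : forall mu, normc mu != 1 -> exists c, bb (shift_op T' mu) c.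
  move=> mu h. have [hlt|hgt|heq] := ltrgtP (normc mu) 1; last by rewrite heq eqxx in h.
  - have [->|mu0] := eqVneq mu 0.
      apply: (bb_of MS0) => x. by have := key1 0 x; rewrite scale0r subr0.
    set nu := conjc (mu^-1).
    have nmu : 0 < normc mu.
      rewrite lt_def normc_ge0 andbT; apply/eqP => /eq0_normc e; by rewrite e eqxx in mu0.
    have nnu : 1 < normc nu.
      rewrite /nu normc_conj normcV. rewrite -(ltr_pM2r nmu) mulVf ?gt_eqF // mul1r //.
    have : invertible_op ip (shift_op T nu).
      apply: NNPP => hn. have := (proj1 (PT1 nu)) hn. lra.
    case=> B [[LB [MB HMB]] c1 c2].
    have MB0 : 0 < `|MB| + 1 by have := normr_ge0 MB; lra.
    have HMB' : forall z, nrm (B z) <= (`|MB| + 1) * nrm z.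
      move=> z. have := HMB z. have := ler_norm MB. have := hn_ge0 z. nra.
    have K0 : 0 < (`|MB| + 1) * (normc mu)^-1 * (`|MTs| + 1).
      by rewrite !mulr_gt0 // invr_gt0.
    apply: (bb_of K0) => x.
    set w := Tstar x - mu^-1 *: x.
    have eip : ip x x = ip (B x) w.
      rewrite -{1}(c2 x) /shift_op /w ipBl ipZl Hadj ipBr ipZr /nu.
      done.
    have h1 : nrm x <= (`|MB| + 1) * nrm w.
      apply: le_from_sq; rewrite ?mulr_ge0 ?hn_ge0 //; first by lra.
      rewrite hn2 eip. apply: le_trans (Re_le_normc _) _.
      apply: le_trans (CS _ _) _. have := HMB' x. have := hn_ge0 w. have := hn_ge0 (B x). nra.
    have ew : w = (- mu^-1) *: (x - mu *: Tstar x).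
      rewrite /w scalerBr scalerA mulNr mulVf // scaleN1r opprK scaleNr addrC. done.
    have h2 : nrm w = (normc mu)^-1 * nrm (x - mu *: Tstar x).
      by rewrite ew hnZ normcN normcV.
    have h3 := key1 mu x.
    have : 0 <= (normc mu)^-1 by rewrite invr_ge0 ltW.
    move: h1 h2 h3. set a := nrm (x - mu *: Tstar x). set b := nrm (shift_op T' mu x).
    set m := (normc mu)^-1. move=> h1 h2 h3 hm.
    rewrite h2 in h1.
    have h4 : (`|MB| + 1) * m * a <= (`|MB| + 1) * m * ((`|MTs| + 1) * b).
      by apply: ler_wpM2l => //; rewrite mulr_ge0 // ltW.
    apply: (le_trans h1). rewrite mulrA. apply: (le_trans h4). by rewrite !mulrA.
  - exists (normc mu - 1); split; first by lra.
    move=> x. have e : mu *: x = T' x - shift_op T' mu x by rewrite /shift_op opprB addrC subrK.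
    have := hnD (T' x) (- shift_op T' mu x). rewrite hnN -e hnZ.
    have := HMT' x. lra.
have N0T' : ~ surj (shift_op T' 0).
  move=> hs; apply: N0T => y. have [x hx] := hs y. exists (Q x).
  by move: hx; rewrite /shift_op !scale0r !subr0.
have [PT1' PT2'] := picture LT' HMT' HbbT' N0T'.
split; split => l.
- by rewrite cd_iff; exact: PT1.
- by rewrite cd_iff; exact: PT1'.
- by rewrite uc_iff; exact: PT2.
- by rewrite uc_iff; exact: PT2'.
Qed.
End H.

Theorem corollary4p7 (R : realType) (V : lmodType R[i]) (ip : V -> V -> R[i])
  (HH : is_hilbert ip)
  (T : V -> V) (HT : bounded_op ip T)
  (Tstar : V -> V) (HTstar : bounded_op ip Tstar) (Hadj : is_adjoint ip T Tstar)
  (Q : V -> V) (HQ : bounded_op ip Q)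
  (HQl : cancel (fun x => Tstar (T x)) Q) (HQr : cancel Q (fun x => Tstar (T x)))
  (Hninv : ~ invertible_op ip T)
  (Hexp : forall x : V, hnorm ip x <= hnorm ip (T x))
  (Hap : forall l : R[i], ap_spectrum ip T l -> unit_circle l) :
  let T' := fun x => T (Q x) in
  ((forall l : R[i], spectrum ip T l <-> closed_unit_disc l) /\
   (forall l : R[i], spectrum ip T' l <-> closed_unit_disc l)) /\
  ((forall l : R[i], ap_spectrum ip T l <-> unit_circle l) /\
   (forall l : R[i], ap_spectrum ip T' l <-> unit_circle l)).
Proof.
case: HH => Hip Hcomp.
exact: (mainT Hip Hcomp HT HTstar Hadj HQ HQl HQr Hninv Hexp Hap).
Qed.
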